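(* Let $A=kQ/I$ be a nondegenerate dimer algebra on a torus with center $Z$, and let $\psi:A\to A'$ be a cyclic contraction. If $A$ is a finitely generated $Z$-module, then $S$ is a finitely generated $R$-module.
   Context: Let $k$ be an algebraically closed field. A dimer quiver is a finite quiver $Q$ (vertices $Q_0$, arrows $Q_1$, head/tail $\operatorname{h},\operatorname{t}$) whose underlying graph embeds in a real two-torus so that each connected component of the complement is simply connected and bounded by an oriented cycle (a unit cycle). The dimer algebra is $A=kQ/I$, $I$ generated by all $p-q$ with $p,q$ paths such that for some arrow $a$ both $pa$ and $qa$ are unit cycles. Perfect matching: $D\subseteq Q_1$ meeting each unit cycle in exactly one arrow; nondegenerate: every arrow in some perfect matching. Simple matching: perfect matching $D$ such that the subquiver with arrows $Q_1\setminus D$ contains a cycle through every vertex. Cancellative: no paths $p\neq q$ of $A$ and path $r$ with $rp=rq\neq0$ or $pr=qr\neq0$. For a dimer algebra $A'=kQ'/I'$ with simple matchings $\mathcal{S}'$, $\tau:A'\to M_{|Q'_0|}(k[x_D:D\in\mathcal{S}'])$ is the algebra map with $\tau(e_i)=E_{ii}$, $\tau(a)=\big(\prod_{D\in\mathcal{S}',a\in D}x_D\big)E_{\operatorname{h}(a),\operatorname{t}(a)}$; $\bar\tau(p)$ is given by $\tau(p)=\bar\tau(p)E_{ji}$ for $p\in e_jA'e_i$, extended $k$-linearly. A contraction $\psi:A\to A'$: $A'=kQ'/I'$ is a dimer algebra with $Q'$ obtained from $Q$ by contracting a set of arrows $Q_1^*\subseteq Q_1$ to vertices, the induced map $kQ\to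 kQ'$ sending $I$ into $I'$ and inducing $\psi$. It is cyclic if $A'$ is cancellative and $S:=k[\cup_{i\in Q_0}\bar\tau\psi(e_iAe_i)]=k[\cup_{i\in Q'_0}\bar\tau(e_iA'e_i)]$. $R:=k[\cap_{i\in Q_0}\bar\tau\psi(e_iAe_i)]$ (isomorphic to the center of the homotopy algebra of $A$). *)

(* Defs.v *)
From HB Require Import structures.
From mathcomp Require Import all_boot all_order all_algebra.
From mathcomp Require Import mpoly.
From Stdlib Require Import Relations.Relation_Operators ClassicalDescription.

Set Implicit Arguments.
Unset Strict Implicit.
Unset Printing Implicit Defensive.

Import GRing.Theory.
Local Open Scope ring_scope.

(* A face/unit cycle is stored as the sequence of its arrows in        *)
(* traversal order (first arrow traversed first), up to rotation.      *)
Record quiver := Quiver {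
  V : finType;
  Ar : finType;
  hd : Ar -> V;
  tl : Ar -> V;
  Fc : finType;             (* index set of the unit cycles (faces) *)
  cyc : Fc -> seq Ar;
  pos : Fc -> bool          (* orientation class of each face (Q_2^+ / Q_2^-) *)
}.

Section Quiv.
Variable Q : quiver.

Definition consec (a b : Ar Q) : bool := hd a == tl b.

(* a path is a start vertex plus its arrows in traversal order *)
Definition qpath := (V Q * seq (Ar Q))%type.

Definition valid (p : qpath) : bool :=
  if p.2 is a :: s then (tl a == p.1) && path consec a s else true.

Definition pend (p : qpath) : V Q :=
  if p.2 is a :: s then hd (last a s) else p.1.

(* Combinatorial description of a cellular embedding (Bocklandt's      *)
(* definition of a dimer quiver): faces glued along arrows, every      *)
(* arrow in exactly one positive and one negative face, every vertex   *)
(* link connected; the resulting closed oriented surface is a torus    *)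
(* iff it is connected and has Euler characteristic 0.                 *)

Definition arrow_end (x : Ar Q * bool) : V Q :=
  if x.2 then hd x.1 else tl x.1.

Definition follows_in_face (a b : Ar Q) : Prop :=
  exists f : Fc Q, exists2 i : nat, (i < size (cyc f))%N &
    nth a (cyc f) i = a /\ nth a (cyc f) (i.+1 %% size (cyc f)) = b.

Definition incidence_edge (v : V Q) (x y : Ar Q * bool) : Prop :=
  [/\ x.2, ~~ y.2, hd x.1 = v, tl y.1 = v & follows_in_face x.1 y.1].

Definition is_dimer : Prop :=
  [/\
      (forall f : Fc Q, cyc f != [::] /\ cycle consec (cyc f)),
      (forall a : Ar Q,
          (\sum_(f : Fc Q | pos f) count_mem a (cyc f) = 1)%N /\
          (\sum_(f : Fc Q | ~~ pos f) count_mem a (cyc f) = 1)%N),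
      (* the link of every vertex is connected (closed surface) *)
      (forall (v : V Q) (x y : Ar Q * bool), arrow_end x = v -> arrow_end y = v ->
          clos_refl_sym_trans _ (incidence_edge v) x y),
      (0 < #|{: V Q}|)%N /\
      (forall x y : V Q, clos_refl_sym_trans _
          (fun u w => exists a : Ar Q, tl a = u /\ hd a = w) x y) &
      (* Euler characteristic |Q0| - |Q1| + |Q2| = 0 : torus *)
      (#|{: V Q}| + #|{: Fc Q}| = #|{: Ar Q}|)%N ].

Definition perfect_matching (D : {set Ar Q}) : Prop :=
  forall f : Fc Q, #|[set a in D | a \in cyc f]| = 1%N.

Definition dimer_nondegenerate : Prop :=
  forall a : Ar Q, exists D : {set Ar Q}, perfect_matching D /\ a \in D.

Definition simple_matching (D : {set Ar Q}) : Prop :=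
  perfect_matching D /\
  exists p : qpath, [/\ valid p, p.2 != [::], pend p = p.1,
     all (fun a => a \notin D) p.2 &
     forall w : V Q, w \in [seq tl a | a <- p.2]].

Variable k : closedFieldType.

(* elements of kQ: finite formal k-linear combinations of paths
   (entries with non-valid paths are ignored, i.e. count as 0) *)
Definition comb := seq (k * qpath).

Definition coef (x : comb) (p : qpath) : k := \sum_(e <- x | e.2 == p) e.1.

Definition eqkQ (x y : comb) : Prop := forall p, valid p -> coef x p = coef y p.

Definition pathc (p : qpath) : comb := [:: (1, p)].
Definition idem (v : V Q) : comb := pathc (v, [::]).
Definition addc (x y : comb) : comb := x ++ y.
Definition scalec (c : k) (x : comb) : comb := [seq (c * e.1, e.2) | e <- x].
Definition subc (x y : comb) : comb := x ++ scalec (-1) y.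

(* product, with the paper's convention: p * q = "q then p",
   nonzero iff q ends where p starts *)
Definition mulc (x y : comb) : comb :=
  flatten [seq [seq (e.1 * f.1, (f.2.1, f.2.2 ++ e.2.2))
               | f <- y & [&& valid e.2, valid f.2 & pend f.2 == e.2.1]]
          | e <- x].

Definition unit_cycle (s : seq (Ar Q)) : Prop :=
  exists f : Fc Q, exists r : nat, s = rot r (cyc f).

(* generating relations of I: p - q with pa and qa unit cycles
   ("pa" = a followed by p) *)
Definition rel_gen (p q : qpath) : Prop :=
  exists a : Ar Q, [/\ p.1 = hd a, q.1 = hd a,
                      unit_cycle (a :: p.2) & unit_cycle (a :: q.2)].

Definition inI (x : comb) : Prop :=
  exists gens : seq (k * qpath * qpath * qpath * qpath),
    (forall g, g \in gens -> rel_gen g.1.1.2 g.1.2) /\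
    eqkQ x (flatten [seq scalec g.1.1.1.1
                      (mulc (pathc g.1.1.1.2)
                         (mulc (subc (pathc g.1.1.2) (pathc g.1.2)) (pathc g.2)))
                    | g <- gens]).

Definition eqA (x y : comb) : Prop := inI (subc x y).

Definition in_center (z : comb) : Prop := forall a : comb, eqA (mulc z a) (mulc a z).

Definition fg_over_center : Prop :=
  exists gs : seq comb, forall a : comb, exists zs : seq comb,
    [/\ size zs = size gs, (forall z, z \in zs -> in_center z) &
        eqA a (flatten [seq mulc zg.1 zg.2 | zg <- zip zs gs])].

Definition cancellative : Prop :=
  forall p q r : qpath, valid p -> valid q -> valid r ->
    ~ eqA (pathc p) (pathc q) ->
    ~ (eqA (mulc (pathc r) (pathc p)) (mulc (pathc r) (pathc q)) /\
       ~ eqA (mulc (pathc r) (pathc p)) [::]) /\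
    ~ (eqA (mulc (pathc p) (pathc r)) (mulc (pathc q) (pathc r)) /\
       ~ eqA (mulc (pathc p) (pathc r)) [::]).

(* k[x_D : D simple matching]: we use one variable per subset of Q_1;
   only variables x_D with D a simple matching ever occur. *)
Definition nvars := #|{: {set Ar Q}}|.
Definition poly := {mpoly k[nvars]}.

Definition is_simple_b (D : {set Ar Q}) : bool :=
  if excluded_middle_informative (simple_matching D) then true else false.

Definition xvar (D : {set Ar Q}) : poly := 'X_(enum_rank D).

Definition tau_mono (p : qpath) : poly :=
  \prod_(a <- p.2)
     \prod_(D : {set Ar Q} | is_simple_b D && (a \in D)) xvar D.

Definition taubar (x : comb) : poly :=
  \sum_(e <- x | valid e.2) e.1 *: tau_mono e.2.

Definition taubar_corner (j : V Q) (P : poly) : Prop :=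
  exists x : comb, P = taubar (mulc (idem j) (mulc x (idem j))).

End Quiv.

Inductive alg_gen (k : closedFieldType) (n : nat) (X : {mpoly k[n]} -> Prop)
  : {mpoly k[n]} -> Prop :=
| alg_gen_base P : X P -> alg_gen X P
| alg_gen_const c : alg_gen X c%:MP
| alg_gen_add P1 P2 : alg_gen X P1 -> alg_gen X P2 -> alg_gen X (P1 + P2)
| alg_gen_mul P1 P2 : alg_gen X P1 -> alg_gen X P2 -> alg_gen X (P1 * P2).

Definition fg_module (k : closedFieldType) (n : nat)
  (R S : {mpoly k[n]} -> Prop) : Prop :=
  exists gs : seq {mpoly k[n]}, (forall g, g \in gs -> S g) /\
    forall P, S P -> exists rs : seq {mpoly k[n]},
      [/\ size rs = size gs, (forall r, r \in rs -> R r) &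
          P = \sum_(rg <- zip rs gs) rg.1 * rg.2].

Section Contraction.
Variables (Q Q' : quiver) (Qs : {set Ar Q}) (pi0 : V Q -> V Q') (pi1 : Ar Q -> Ar Q').

(* Q' is obtained from Q by contracting the arrows of Qs to vertices:
   Q'_0 = Q_0 / (equivalence generated by the arrows in Qs),
   Q'_1 = Q_1 \ Qs, with induced head and tail maps. *)
Definition contracted_quiver : Prop :=
  [/\ (forall v' : V Q', exists v : V Q, pi0 v = v'),
      (forall x y : V Q, pi0 x = pi0 y <->
         clos_refl_sym_trans _
           (fun u w => exists2 a : Ar Q, a \in Qs & tl a = u /\ hd a = w) x y),
      {in [predC Qs] &, injective pi1},
      (forall b : Ar Q', exists2 a : Ar Q, a \notin Qs & pi1 a = b) &
      (forall a : Ar Q, a \notin Qs ->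
         hd (pi1 a) = pi0 (hd a) /\ tl (pi1 a) = pi0 (tl a))].

Definition psi_path (p : qpath Q) : qpath Q' :=
  (pi0 p.1, [seq pi1 a | a <- p.2 & a \notin Qs]).

Definition psi (k : closedFieldType) (x : comb Q k) : comb Q' k :=
  [seq (e.1, psi_path e.2) | e <- x & valid e.2].

Definition contraction (k : closedFieldType) : Prop :=
  [/\ is_dimer Q, is_dimer Q', contracted_quiver &
      forall x : comb Q k, inI x -> inI (psi x)].

Definition taubar_psi_corner (k : closedFieldType) (i : V Q) (P : poly Q' k) : Prop :=
  exists x : comb Q k, P = taubar (psi (mulc (@idem Q k i) (mulc x (@idem Q k i)))).

Definition Salg (k : closedFieldType) : poly Q' k -> Prop :=
  alg_gen (fun P => exists i : V Q, @taubar_psi_corner k i P).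

Definition Ralg (k : closedFieldType) : poly Q' k -> Prop :=
  alg_gen (fun P => forall i : V Q, @taubar_psi_corner k i P).

Definition cyclic_contraction (k : closedFieldType) : Prop :=
  [/\ @contraction k, @cancellative Q' k &
      forall P, @Salg k P <-> alg_gen (fun P => exists j : V Q', @taubar_corner Q' k j P) P].

End Contraction.

Arguments Salg : clear implicits.
Arguments Ralg : clear implicits.
Arguments cyclic_contraction : clear implicits.
Arguments contraction : clear implicits.

(* Main.v *)
Require Import Defs.
From mathcomp Require Import all_boot all_algebra mpoly.
From Stdlib Require Import Relations.Relation_Operators ClassicalDescription.
Set Warnings "-all".
Set Implicit Arguments.
Unset Strict Implicit.
Unset Printing Implicit Defensive.
Import GRing.Theory.
Local Open Scope ring_scope.

Section Gen.
Variables (k : closedFieldType) (n : nat) (X : quiver) (phi : Ar X -> {mpoly k[n]}).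
Local Notation B := {mpoly k[n]}.
Implicit Types (x y : comb X k) (p q : qpath X).

Definition Gp (p : qpath X) : B := \prod_(a <- p.2) phi a.
Definition Fw (w : V X -> V X -> bool) (x : comb X k) : B :=
  \sum_(e <- x | valid e.2 && w e.2.1 (pend e.2)) e.1 *: Gp e.2.
Definition Fab (a b : V X) := Fw (fun u v => (u == a) && (v == b)).

Lemma Fw_cat w x y : Fw w (x ++ y) = Fw w x + Fw w y.
Proof. by rewrite /Fw big_cat. Qed.

Lemma Fw_scale w c x : Fw w (scalec c x) = c *: Fw w x.
Proof.
rewrite /Fw /scalec big_map scaler_sumr; apply: eq_bigr => e _ /=.
by rewrite scalerA.
Qed.

Lemma Fw_nil w : Fw w [::] = 0.
Proof. by rewrite /Fw big_nil. Qed.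

Lemma Fw_sub w x y : Fw w (subc x y) = Fw w x - Fw w y.
Proof. by rewrite /subc Fw_cat Fw_scale scaleN1r. Qed.

Lemma Fw_pathc w p : Fw w (pathc k p) = if valid p && w p.1 (pend p) then Gp p else 0.
Proof. by rewrite /Fw /pathc big_cons big_nil addr0 /=; case: ifP; rewrite ?scale1r. Qed.

Lemma Fw_flatten w (l : seq (comb X k)) : Fw w (flatten l) = \sum_(y <- l) Fw w y.
Proof.
elim: l => [|y l IH]; first by rewrite big_nil Fw_nil.
by rewrite /= Fw_cat IH big_cons.
Qed.

Lemma coef_cat x y p : coef (x ++ y) p = coef x p + coef y p.
Proof. by rewrite /coef big_cat. Qed.

Lemma coef_scale c x p : coef (scalec c x) p = c * coef x p.
Proof. by rewrite /coef /scalec big_map mulr_sumr. Qed.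

Lemma coef_sub x y p : coef (subc x y) p = coef x p - coef y p.
Proof. by rewrite /subc coef_cat coef_scale mulN1r. Qed.

Lemma Fw_coef w x : Fw w x =
  \sum_(p <- undup (map snd x) | valid p && w p.1 (pend p)) coef x p *: Gp p.
Proof.
rewrite /Fw /coef.
under [RHS]eq_bigr => p _ do rewrite scaler_suml big_mkcond /=.
rewrite exchange_big /= [LHS]big_mkcond /=.
apply: eq_big_seq => e ex.
have ue : uniq (undup (map snd x)) by apply: undup_uniq.
have ein : e.2 \in undup (map snd x) by rewrite mem_undup; exact: map_f ex.
rewrite big_mkcond (bigD1_seq e.2) //=.
rewrite eqxx big1 ?addr0; first by case: ifP.
move=> p /negbTE ne; rewrite eq_sym ne; by case: ifP.
Qed.

Lemma eqkQ_Fw w x y : eqkQ x y -> Fw w x = Fw w y.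
Proof.
move=> H; apply/eqP; rewrite -subr_eq0 -Fw_sub Fw_coef big1 // => p /andP[vp _].
by rewrite coef_sub H // subrr scale0r.
Qed.

Lemma valid_cons (v : V X) (a : Ar X) t : valid (v, a :: t) = (tl a == v) && valid (hd a, t).
Proof. case: t => [|b t]; rewrite /valid /= //; by rewrite /consec [hd a == _]eq_sym. Qed.

Lemma pend_cons (v : V X) (a : Ar X) t : pend (v, a :: t) = pend (hd a, t).
Proof. by case: t => [|b t]; rewrite /pend /=. Qed.

Lemma pend_last (a : Ar X) t : pend (hd a, t) = hd (last a t).
Proof. by case: t => [|b t]; rewrite /pend /=. Qed.

Lemma valid_cat (v : V X) (s1 : seq (Ar X)) v' s2 : valid (v, s1) -> valid (v', s2) -> pend (v, s1) = v' ->
  valid (v, s1 ++ s2) /\ pend (v, s1 ++ s2) = pend (v', s2).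
Proof.
elim: s1 v => [|a t IH] v /=.
  by move=> _ h2 e; change (pend (v, [::])) with v in e; subst v'.
rewrite [valid (v, a :: t)]valid_cons => /andP[ta vt] h2 pe.
rewrite [valid (v, a :: t ++ s2)]valid_cons [pend (v, a :: t ++ s2)]pend_cons ta /=.
apply: IH => //; by rewrite -pe pend_cons.
Qed.

Lemma Gp_cat (v : V X) (s1 : seq (Ar X)) s2 (v' v'' : V X) : Gp (v, s1 ++ s2) = Gp (v', s1) * Gp (v'', s2).
Proof. by rewrite /Gp big_cat. Qed.

Lemma Fab_mul a b x y :
  Fab a b (mulc x y) = \sum_(m : V X) Fab m b x * Fab a m y.
Proof.
pose T (e f : k * qpath X) : B :=
  if [&& valid e.2, valid f.2, pend f.2 == e.2.1, f.2.1 == a & pend e.2 == b]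
  then (e.1 * f.1) *: (Gp f.2 * Gp e.2) else 0.
transitivity (\sum_(e <- x) \sum_(f <- y) T e f).
  rewrite /Fab /Fw /mulc big_flatten big_map /=; apply: eq_bigr => e _.
  rewrite big_map big_filter_cond big_mkcond /=; apply: eq_bigr => f _.
  rewrite /T; case: (boolP [&& valid e.2, valid f.2 & pend f.2 == e.2.1]) => //.
    case/and3P => ve vf pe /=.
    have [vc pc] := valid_cat vf ve (eqP pe).
    case: f vf pe vc pc => [fc [fv fs]] /= vf pe vc pc.
    case: e ve pe vc pc => [ec [ev es]] /= ve pe vc pc.
    by rewrite ve vf pe vc pc /= (Gp_cat fv fs es fv ev).
  move/negbTE => H /=; case: ifP => //; case/and5P => h1 h2 h3 _ _.
  by move: H; rewrite h1 h2 h3.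
rewrite /Fab /Fw.
under [RHS]eq_bigr => m _.
  rewrite big_mkcond mulr_suml.
  under eq_bigr => e _ do rewrite big_mkcond mulr_sumr.
  over.
rewrite /= [RHS]exchange_big; apply: eq_bigr => e _.
rewrite [RHS]exchange_big; apply: eq_bigr => f _.
rewrite (bigD1 e.2.1) //= big1 ?addr0.
  rewrite /T eqxx /=.
  case: (valid e.2); case: (valid f.2); case: (pend f.2 == e.2.1);
    case: (f.2.1 == a); case: (pend e.2 == b); rewrite /= ?mul0r ?mulr0 //.
  by rewrite -scalerAl -scalerAr scalerA mulrC [Gp f.2 * _]mulrC.
move=> i /negbTE ne; by rewrite [e.2.1 == i]eq_sym ne /= andbF mul0r.
Qed.

Lemma Fab_idem a b v : Fab a b (idem k v) = ((v == a) && (v == b))%:R.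
Proof. by rewrite /Fab /idem Fw_pathc /= /Gp big_nil; case: ifP. Qed.

Lemma Fw_total x : Fw (fun _ _ => true) x = \sum_(a : V X) \sum_(b : V X) Fab a b x.
Proof.
rewrite /Fab /Fw [LHS]big_mkcond.
under [RHS]eq_bigr => a' _.
  under eq_bigr => b' _ do rewrite big_mkcond.
  rewrite exchange_big.
  over.
rewrite [RHS]exchange_big; apply: eq_bigr => e _ /=.
rewrite (bigD1 e.2.1) //= (bigD1 (pend e.2)) //= !eqxx andbT big1 ?addr0.
  rewrite big1 ?addr0 // => a' /negbTE ne.
  by apply: big1 => b' _; rewrite eq_sym ne andbF.
by move=> b' /negbTE ne; rewrite eq_sym ne /= andbF.
Qed.

Hypothesis Hcyc : forall f : Fc X, cycle (@consec X) (cyc f).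

Lemma unit_cycle_valid (a : Ar X) t : unit_cycle (a :: t) ->
  valid (hd a, t) /\ pend (hd a, t) = tl a.
Proof.
case=> f [r E].
have : cycle (@consec X) (a :: t) by rewrite E rot_cycle.
rewrite /= rcons_path => /andP[pt /eqP lt].
split; last by rewrite pend_last.
have := valid_cons (tl a) a t; rewrite eqxx /= => <-.
by rewrite /valid /= eqxx.
Qed.

Lemma rel_gen_props p q : rel_gen p q ->
  [/\ valid p, valid q, p.1 = q.1 & pend p = pend q].
Proof.
case=> a [e1 e2 u1 u2]; case: p e1 u1 => pv ps /= e1 u1; case: q e2 u2 => qv qs /= e2 u2.
subst pv qv.
have [v1 p1] := unit_cycle_valid u1; have [v2 p2] := unit_cycle_valid u2.
by split => //; rewrite p1 p2.
Qed.

Hypothesis Hrel : forall p q, rel_gen p q -> Gp p = Gp q.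

Lemma Fab_gen a b c r p q s : rel_gen p q ->
  Fab a b (scalec c (mulc (pathc k r) (mulc (subc (pathc k p) (pathc k q)) (pathc k s)))) = 0.
Proof.
move=> H; have [vp vq e1 e2] := rel_gen_props H.
rewrite /Fab Fw_scale -/(Fab a b _) Fab_mul big1 ?scaler0 // => m _.
rewrite Fab_mul big1 ?mulr0 // => m' _.
by rewrite /Fab Fw_sub !Fw_pathc vp vq e1 e2 (Hrel H) subrr mul0r.
Qed.

Lemma Fab_I a b x : inI x -> Fab a b x = 0.
Proof.
case=> gens [Hg He]; rewrite /Fab (eqkQ_Fw _ He) Fw_flatten big_map.
rewrite big_seq big1 // => g gin; exact: Fab_gen (Hg g gin).
Qed.

Lemma Fw_I x : inI x -> Fw (fun _ _ => true) x = 0.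
Proof.
move=> H; rewrite Fw_total big1 // => a' _; rewrite big1 // => b' _; exact: Fab_I.
Qed.

Lemma Fab_eqA a b x y : eqA x y -> Fab a b x = Fab a b y.
Proof. by move/(Fab_I a b); rewrite /Fab Fw_sub => /eqP; rewrite subr_eq0 => /eqP. Qed.

Lemma Fab_arrow a b (c : Ar X) :
  Fab a b (pathc k (tl c, [:: c])) = ((tl c == a) && (hd c == b))%:R * phi c.
Proof.
rewrite /Fab Fw_pathc /Gp big_cons big_nil mulr1.
have -> : valid (tl c, [:: c]) by rewrite /valid /= eqxx.
have -> : pend (tl c, [:: c]) = hd c by [].
by rewrite /=; case: ifP; rewrite ?mul1r ?mul0r.
Qed.

Lemma Fab_center_off z a b : in_center z -> a != b -> Fab a b z = 0.
Proof.
move=> hz /negbTE ne; have := Fab_eqA a b (hz (idem k a)).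
rewrite !Fab_mul [X in X = _](bigD1 a) //= Fab_idem eqxx /= mulr1.
rewrite [\sum_(i | i != a) _]big1 ?addr0.
  by move=> ->; apply: big1 => m _; rewrite Fab_idem ne andbF mul0r.
by move=> m /negbTE nm; rewrite Fab_idem eqxx eq_sym nm /= mulr0.
Qed.

Lemma Fab_center_arrow z (c : Ar X) : in_center z -> phi c != 0 ->
  Fab (tl c) (tl c) z = Fab (hd c) (hd c) z.
Proof.
move=> hz nz; have := Fab_eqA (tl c) (hd c) (hz (pathc k (tl c, [:: c]))).
rewrite !Fab_mul (bigD1 (hd c)) //= [\sum_(i | i != hd c) _]big1 ?addr0; last first.
  by move=> m /negbTE nm; rewrite Fab_arrow eqxx eq_sym nm /= mul0r mulr0.
rewrite (bigD1 (tl c)) //= [\sum_(i | i != tl c) _]big1 ?addr0; last first.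
  by move=> m /negbTE nm; rewrite Fab_arrow eq_sym nm /= !mul0r.
by rewrite !Fab_arrow !eqxx /= !mul1r mulrC => /(mulfI nz).
Qed.

Lemma Fab_corner a b i x :
  Fab a b (mulc (idem k i) (mulc x (idem k i))) = ((a == i) && (b == i))%:R * Fab i i x.
Proof.
rewrite Fab_mul (bigD1 i) //= big1 ?addr0; last first.
  by move=> m /negbTE nm; rewrite Fab_idem [i == m]eq_sym nm /= mul0r.
rewrite Fab_idem Fab_mul (bigD1 i) //= big1 ?addr0; last first.
  by move=> m /negbTE nm; rewrite Fab_idem [i == m]eq_sym nm andbF mulr0.
rewrite Fab_idem !eqxx andbT [b == i]eq_sym [a == i]eq_sym.
by case: (i == b); case: (i == a); rewrite /= ?mul1r ?mul0r ?mulr1 ?mulr0.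
Qed.

Lemma Fw_corner i x :
  Fw (fun _ _ => true) (mulc (idem k i) (mulc x (idem k i))) = Fab i i x.
Proof.
rewrite Fw_total (bigD1 i) //= [\sum_(a' | a' != i) _]big1 ?addr0; last first.
  by move=> a' /negbTE na; apply: big1 => b' _; rewrite Fab_corner na mul0r.
rewrite (bigD1 i) //= big1 ?addr0; last first.
  by move=> b' /negbTE nb; rewrite Fab_corner nb andbF mul0r.
by rewrite Fab_corner !eqxx mul1r.
Qed.

Lemma Fab_center_const z u w : in_center z -> (forall c, phi c != 0) ->
  clos_refl_sym_trans _ (fun u w => exists a : Ar X, tl a = u /\ hd a = w) u w ->
  Fab u u z = Fab w w z.
Proof.
move=> hz nz; elim.
- by move=> x0 y0 [c [<- <-]]; apply: Fab_center_arrow.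
- by [].
- by move=> x0 y0 _ ->.
- by move=> x0 y0 z0 _ -> _ ->.
Qed.

Lemma rel_in_I p q : rel_gen p q -> inI (subc (pathc k p) (pathc k q)).
Proof.
move=> H; have [vp vq e1 e2] := rel_gen_props H.
exists [:: ((1, (pend p, [::]), p, q), (p.1, [::]))]; split.
  by move=> g; rewrite inE => /eqP -> /=.
move=> r _.
case: p H vp vq e1 e2 => pv ps; case: q => qv qs /= H vp vq e1 e2; subst qv.
rewrite /mulc /subc /scalec /pathc /=.
have -> : pend (pv, [::]) = pv by [].
rewrite vp vq eqxx /= vp vq e2 eqxx /= !cats0.
by rewrite !mul1r !mulr1.
Qed.

End Gen.

Section Dimer.
Variables (k : closedFieldType) (Y : quiver).
Local Notation B := (Defs.poly Y k).

Definition phiD (b : Ar Y) : B :=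
  \prod_(D : {set Ar Y} | is_simple_b D && (b \in D)) xvar k D.

Lemma xvar_neq0 (D : {set Ar Y}) : xvar k D != 0.
Proof.
apply/eqP => h; have := mcoeffXU k (enum_rank D) (enum_rank D).
rewrite -/(xvar k D) h mcoeff0 eqxx => /eqP; by rewrite eq_sym oner_eq0.
Qed.

Lemma phiD_neq0 b : phiD b != 0.
Proof.
apply: (big_ind (fun P : B => P != 0)); first exact: oner_neq0.
  by move=> ? ? ? ?; rewrite mulf_neq0.
by move=> D _; apply: xvar_neq0.
Qed.

Hypothesis HY : is_dimer Y.

Lemma cyc_uniq (f : Fc Y) : uniq (cyc f).
Proof.
case: HY => _ Hc _ _ _.
apply: count_mem_uniq => a.
have le1 : (count_mem a (cyc f) <= 1)%N.
  have [H1 H2] := Hc a.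
  case: (boolP (pos f)) => pf.
    by rewrite -H1 (bigD1 f) //= leq_addr.
  by rewrite -H2 (bigD1 f) //= leq_addr.
rewrite -has_pred1 has_count.
by case: (count_mem a (cyc f)) le1 => [|[|m]].
Qed.

Lemma face_prod (f : Fc Y) :
  \prod_(b <- cyc f) phiD b = \prod_(D : {set Ar Y} | is_simple_b D) xvar k D.
Proof.
rewrite /phiD.
under eq_bigr => b _ do rewrite big_mkcondr.
rewrite exchange_big /=; apply: eq_bigr => D sD.
rewrite -big_mkcond big_const_seq.
suff -> : count (fun b => b \in D) (cyc f) = 1%N by rewrite /= mulr1.
have pm : perfect_matching D.
  by move: sD; rewrite /is_simple_b; case: excluded_middle_informative => // [[]].
rewrite -size_filter.
have /card_uniqP <- : uniq [seq b <- cyc f | b \in D] by rewrite filter_uniq ?cyc_uniq.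
rewrite -(pm f); apply: eq_card => a; by rewrite mem_filter !inE.
Qed.

Lemma GpD_rel (p q : qpath Y) : rel_gen p q -> Gp phiD p = Gp phiD q.
Proof.
case=> a [_ _ [f [r E1]] [g [r' E2]]].
have H : forall s, Gp phiD (hd a, a :: s) = phiD a * Gp phiD (hd a, s).
  by move=> s; rewrite /Gp big_cons.
have Hf : forall (f : Fc Y) r s, a :: s = rot r (cyc f) ->
    phiD a * Gp phiD (hd a, s) = \prod_(D : {set Ar Y} | is_simple_b D) xvar k D.
  move=> f0 r0 s E; rewrite -H /Gp /= E -(face_prod f0).
  by apply: perm_big; rewrite perm_rot.
have := Hf _ _ _ E1; rewrite -(Hf _ _ _ E2) => /(mulfI (phiD_neq0 a)).
by rewrite /Gp.
Qed.

Lemma HcycD (f : Fc Y) : cycle (@consec Y) (cyc f).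
Proof. by case: HY => Hc _ _ _ _; case: (Hc f). Qed.

Lemma taubar_Fw (y : comb Y k) : taubar y = Fw phiD (fun _ _ => true) y.
Proof. by rewrite /taubar /Fw; apply: eq_bigl => e; rewrite andbT. Qed.

Lemma taubar_I (y : comb Y k) : inI y -> taubar y = 0.
Proof. by move=> H; rewrite taubar_Fw (Fw_I HcycD GpD_rel). Qed.

End Dimer.

Section Contr.
Variables (k : closedFieldType) (Q Q' : quiver) (Qs : {set Ar Q})
  (pi0 : V Q -> V Q') (pi1 : Ar Q -> Ar Q').
Local Notation B := (Defs.poly Q' k).

Definition phiQ (a : Ar Q) : B := if a \in Qs then 1 else phiD k (pi1 a).

Lemma phiQ_neq0 a : phiQ a != 0.
Proof. rewrite /phiQ; case: ifP => _; [exact: oner_neq0 | exact: phiD_neq0]. Qed.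

Lemma tau_psi (p : qpath Q) : tau_mono k (psi_path Qs pi0 pi1 p) = Gp phiQ p.
Proof.
rewrite /tau_mono /psi_path /= big_map big_filter big_mkcond /Gp.
by apply: eq_bigr => a _; rewrite /phiQ; case: (a \in Qs).
Qed.

Hypothesis HC : contracted_quiver Qs pi0 pi1.

Lemma valid_psi (v : V Q) (s : seq (Ar Q)) : valid (v, s) ->
  valid (psi_path Qs pi0 pi1 (v, s)) /\ pend (psi_path Qs pi0 pi1 (v, s)) = pi0 (pend (v, s)).
Proof.
case: HC => _ Hpi0 _ _ Hhd.
elim: s v => [|a t IH] v; first by [].
rewrite valid_cons pend_cons => /andP[/eqP ta vt].
have [IH1 IH2] := IH _ vt.
rewrite /psi_path /=.
case: (boolP (a \in Qs)) => aQ /=.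
  have -> : pi0 v = pi0 (hd a).
    apply/Hpi0; rewrite -ta; apply: rst_step; by exists a.
  by split.
have [h1 h2] := Hhd a aQ.
rewrite valid_cons pend_cons h1 h2 ta eqxx /=.
by split.
Qed.

Lemma taubar_psi (x : comb Q k) : taubar (psi Qs pi0 pi1 x) = Fw phiQ (fun _ _ => true) x.
Proof.
rewrite /taubar /psi big_map big_filter_cond /Fw.
apply: eq_big => [e|e /andP[ve _]] /=.
  case: (boolP (valid e.2)) => //= ve.
  by case: e ve => c [v s] /= ve; have [-> _] := valid_psi ve.
by rewrite tau_psi.
Qed.

Hypothesis HQ : is_dimer Q.
Hypothesis HQ' : is_dimer Q'.
Hypothesis HI : forall x : comb Q k, inI x -> inI (psi Qs pi0 pi1 x).

Lemma HcycQ (f : Fc Q) : cycle (@consec Q) (cyc f).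
Proof. by case: HQ => Hc _ _ _ _; case: (Hc f). Qed.

Lemma GpQ_rel (p q : qpath Q) : rel_gen p q -> Gp phiQ p = Gp phiQ q.
Proof.
move=> H; have [vp vq _ _] := rel_gen_props HcycQ H.
have := taubar_I HQ' (HI (rel_in_I k HcycQ H)).
rewrite taubar_psi Fw_sub !Fw_pathc vp vq /= => /eqP; rewrite subr_eq0 => /eqP.
by [].
Qed.

End Contr.

Section Mod.
Variables (B : comNzRingType) (I : finType) (N : nat) (Rp : B -> Prop).
Hypotheses (R0 : Rp 0) (R1 : Rp 1)
  (RD : forall a b, Rp a -> Rp b -> Rp (a + b))
  (RM : forall a b, Rp a -> Rp b -> Rp (a * b)).
Variable L : I -> 'I_N -> B.

Definition spanI (i : I) (P : B) :=
  exists r : 'I_N -> B, (forall m, Rp (r m)) /\ P = \sum_m r m * L i m.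
Definition hh (c : {ffun I -> 'I_N}) := \prod_i L i (c i).
Definition NN (P : B) :=
  exists r : {ffun I -> 'I_N} -> B, (forall c, Rp (r c)) /\ P = \sum_c r c * hh c.

Lemma Rp_prod (F : I -> B) : (forall i, Rp (F i)) -> Rp (\prod_i F i).
Proof. by move=> H; apply: big_ind. Qed.

Lemma NN_prod (a : I -> B) : (forall i, spanI i (a i)) -> NN (\prod_i a i).
Proof.
move=> H; have [r Hr] := fin_all_exists H.
exists (fun f => \prod_i r i (f i)); split.
  by move=> f; apply: Rp_prod => i; case: (Hr i).
transitivity (\prod_i \sum_m r i m * L i m).
  by apply: eq_bigr => i _; case: (Hr i).
by rewrite bigA_distr_bigA; apply: eq_bigr => f _; rewrite big_split.
Qed.

Lemma NN0 : NN 0.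
Proof. by exists (fun _ => 0); split => //; rewrite big1 // => c _; rewrite mul0r. Qed.

Lemma NN_add P P' : NN P -> NN P' -> NN (P + P').
Proof.
case=> r [Hr ->] [r' [Hr' ->]]; exists (fun c => r c + r' c); split.
  by move=> c; apply: RD.
by rewrite -big_split; apply: eq_bigr => c _; rewrite mulrDl.
Qed.

Lemma NN_scale s P : Rp s -> NN P -> NN (s * P).
Proof.
move=> Hs [r [Hr ->]]; exists (fun c => s * r c); split.
  by move=> c; apply: RM.
by rewrite mulr_sumr; apply: eq_bigr => c _; rewrite mulrA.
Qed.

Lemma NN_sum (J : finType) (F : J -> B) : (forall j, NN (F j)) -> NN (\sum_j F j).
Proof. by move=> H; apply: big_ind => //; [exact: NN0 | exact: NN_add]. Qed.

Lemma NN_mul P P' : (forall c d, NN (hh c * hh d)) -> NN P -> NN P' -> NN (P * P').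
Proof.
move=> Hh [r [Hr ->]] [r' [Hr' ->]].
rewrite mulr_suml; apply: NN_sum => c; rewrite mulr_sumr; apply: NN_sum => d.
have -> : r c * hh c * (r' d * hh d) = (r c * r' d) * (hh c * hh d).
  by rewrite -!mulrA; congr (_ * _); rewrite mulrCA.
by apply: NN_scale; [apply: RM|apply: Hh].
Qed.

End Mod.

Theorem lemma3p16 (k : closedFieldType) (Q Q' : quiver) (Qs : {set Ar Q})
  (pi0 : V Q -> V Q') (pi1 : Ar Q -> Ar Q') :
  is_dimer Q -> dimer_nondegenerate Q ->
  cyclic_contraction Q Q' Qs pi0 pi1 k ->
  @fg_over_center Q k ->
  fg_module (Ralg Q Q' Qs pi0 pi1 k) (Salg Q Q' Qs pi0 pi1 k).
Proof.
move=> HQ _ [[_ HQ' HC HI] _ _] [gs Hgs].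
set Rp := Ralg Q Q' Qs pi0 pi1 k.
set Sp := Salg Q Q' Qs pi0 pi1 k.
pose phi := phiQ k Qs pi1.
pose F (i : V Q) (x : comb Q k) := Fab phi i i x.
have Hcyc := HcycQ HQ.
have Hrel := GpQ_rel HC HQ HQ' HI.
have corner : forall i P, taubar_psi_corner Qs pi0 pi1 i P <-> exists x, P = F i x.
  move=> i P; rewrite /taubar_psi_corner; split => -[x ->]; exists x;
  by rewrite taubar_psi // Fw_corner.
have R0 : Rp 0 by rewrite -(mpolyC0 _ k); apply: alg_gen_const.
have R1 : Rp 1 by rewrite -(mpolyC1 _ k); apply: alg_gen_const.
have RD : forall a b, Rp a -> Rp b -> Rp (a + b) by move=> a b; apply: alg_gen_add.
have RM : forall a b, Rp a -> Rp b -> Rp (a * b) by move=> a b; apply: alg_gen_mul.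
have cent : forall z, in_center z -> forall i j, F i z = F j z.
  move=> z hz i j; apply: (Fab_center_const Hcyc Hrel hz (phiQ_neq0 k Qs pi1)).
  by case: HQ => _ _ _ [_ Hc] _; apply: Hc.
have centR : forall z, in_center z -> forall i, Rp (F i z).
  by move=> z hz i; apply: alg_gen_base => j; apply/corner; exists z; exact: cent.
have Fmul_c : forall z x i, in_center z -> F i (mulc z x) = F i z * F i x.
  move=> z x i hz; rewrite /F Fab_mul (bigD1 i) //= big1 ?addr0 // => m nm.
  by rewrite (Fab_center_off Hcyc Hrel hz nm) mul0r.
pose N := (size gs).+1.
pose L (i : V Q) (m : 'I_N) := F i (nth [::] (idem k i :: gs) m).
have inC : forall i x, taubar_psi_corner Qs pi0 pi1 i (F i x).
  by move=> i x; apply/corner; exists x.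
have Cspan : forall i x, spanI Rp L i (F i x).
  move=> i x; have [zs [szs zc He]] := Hgs x.
  have -> : F i x = \sum_(zg <- zip zs gs) F i (mulc zg.1 zg.2).
    by rewrite /F (Fab_eqA Hcyc Hrel i i He) /Fab Fw_flatten big_map.
  rewrite (big_nth ([::], [::])) size_zip szs minnn big_mkord.
  exists (fun m : 'I_N => if (m : nat) is j.+1 then F i (nth [::] zs j) else 0); split.
    move=> [[|j] hj] //=; apply: centR; apply: zc; apply: mem_nth; by rewrite szs.
  rewrite big_ord_recl /= mul0r add0r; apply: eq_bigr => j _.
  rewrite nth_zip //= add0n Fmul_c; last by apply: zc; apply: mem_nth; rewrite szs.
  by rewrite /L lift0.
have C1 : forall i, F i (idem k i) = 1 by move=> i; rewrite /F Fab_idem eqxx.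
have Cmul : forall i x y, F i x * F i y =
    F i (mulc (mulc (idem k i) (mulc x (idem k i))) (mulc (idem k i) (mulc y (idem k i)))).
  move=> i x y; rewrite /F Fab_mul (bigD1 i) //= big1 ?addr0.
    by rewrite !Fab_corner !eqxx !mul1r.
  by move=> m /negbTE nm; rewrite Fab_corner nm /= mulr0n !mul0r.
have Lspan : forall i m1 m2, spanI Rp L i (L i m1 * L i m2).
  by move=> i m1 m2; rewrite /L Cmul; apply: Cspan.
have LS : forall i m, Sp (L i m).
  by move=> i m; apply: alg_gen_base; exists i; apply: inC.
have SNN : forall P, Sp P -> NN Rp L P.
  move=> P; elim.
  - move=> P0 [i /corner [x ->]].
    have -> : F i x = \prod_j (if j == i then F i x else F j (idem k j)).
      by rewrite (bigD1 i) //= eqxx big1 ?mulr1 // => j /negbTE nj; rewrite nj C1.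
    by apply: (NN_prod R1 RM) => j; case: eqP => [->|_]; apply: Cspan.
  - move=> c; rewrite -[c%:MP]mulr1; apply: (NN_scale RM); first exact: alg_gen_const.
    have -> : (1 : Defs.poly Q' k) = \prod_(j : V Q) F j (idem k j).
      by rewrite big1 // => j _; rewrite C1.
    by apply: (NN_prod R1 RM) => j; apply: Cspan.
  - by move=> P1 P2 _ H1 _ H2; apply: (NN_add RD).
  - move=> P1 P2 _ H1 _ H2; apply: (NN_mul R0 RD RM) => // c d.
    by rewrite /hh -big_split; apply: (NN_prod R1 RM) => j; apply: Lspan.
exists [seq hh L c | c <- index_enum {ffun V Q -> 'I_N}]; split.
  move=> g /mapP [c _ ->]; rewrite /hh; apply: (big_ind Sp) => //.
  - by rewrite -(mpolyC1 _ k); apply: alg_gen_const.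
  - by move=> ? ? ? ?; apply: alg_gen_mul.
move=> P /SNN [r [Hr ->]].
exists [seq r c | c <- index_enum {ffun V Q -> 'I_N}]; split.
- by rewrite !size_map.
- by move=> r0 /mapP [c _ ->].
- by rewrite zip_map big_map.
Qed.
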